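(* Let $p\ge1$ and $\gamma_1,\ldots,\gamma_p \in (0,1)$ be such that $\{1,\gamma_1,\ldots,\gamma_p\}$ is linearly independent over $\mathbb{Q}$. Then every $\vec{x} \in X_{\gamma_1} \times \cdots \times X_{\gamma_p}$, regarded as a sequence in $\Sigma_{2,p}^\omega$, satisfies $P(\vec{x},n)=(n+1)^p$ for every $n \geq 1$.
   Context: $\Sigma_2=\{0,1\}$, $\Sigma_2^\omega$ is the set of infinite binary sequences $x=x_1x_2\cdots$. A subword of $x$ of length $n$ is $x_{k+1}\cdots x_{k+n}$ for some $k\ge0$, and $P(x,n)$ is the number of distinct subwords of length $n$. A sequence is recurrent if every subword occurs infinitely often. For a finite word $u$ over $\{0,1\}$, $|u|_1$ is the number of $1$'s in $u$; $x$ is balanced if $||u|_1-|v|_1|\le 1$ for all subwords $u,v$ of $x$ of the same length. For $\gamma\in[0,1]$, $X_\gamma$ is the set of $x\in\Sigma_2^\omega$ that are recurrent, balanced, and satisfy $\lim_{n\to\infty}\frac1n\#\{1\le j\le n: x_j=1\}=\gamma$. $\Sigma_{2,p}=\Sigma_2^p$ is the alphabet of $p$-tuples, and a sequence $\vec x=\vec x_1\vec x_2\cdots\in\Sigma_{2,p}^\omega$ with $\vec x_i=(x^{(1)}_i,\ldots,x^{(p)}_i)$ is identified with the $p$-tuple of binary sequences $(x^{(1)},\ldots,x^{(p)})$, where $x^{(j)}=x^{(j)}_1x^{(j)}_2\cdots$; subwords and $P(\vec x,n)$ are taken over the alphabet $\Sigma_{2,p}$. *)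

(* Defs.v *)
From HB Require Import structures.
From mathcomp Require Import all_boot all_order all_algebra.
From mathcomp Require Import boolp classical_sets reals topology normedtype sequences.
Set Implicit Arguments. Unset Strict Implicit. Unset Printing Implicit Defensive.
Import Order.TTheory GRing.Theory Num.Theory numFieldNormedType.Exports.

(* Infinite binary sequences x = x_1 x_2 ... are functions nat -> bool,
   with x_{i+1} = x i (0-based indexing). *)
Definition binseq := nat -> bool.

Definition ones (x : binseq) (k n : nat) : nat := \sum_(k <= i < k + n) (x i : nat).

Definition balanced (x : binseq) : Prop :=
  forall n k l : nat, (`|(ones x k n)%:Z - (ones x l n)%:Z| <= 1)%R.

Definition recurrent (x : binseq) : Prop :=
  forall k n N : nat, exists m, (N <= m)%N /\ forall i, (i < n)%N -> x (m + i) = x (k + i).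

Definition freq (R : realType) (x : binseq) (n : nat) : R :=
  ((ones x 0 n)%:R / n%:R)%R.

Local Open Scope classical_set_scope.
Definition X_gamma (R : realType) (gamma : R) (x : binseq) : Prop :=
  [/\ recurrent x, balanced x & freq R x @ \oo --> gamma].
Local Close Scope classical_set_scope.

(* Sequences over Sigma_{2,p}: a p-tuple of binary sequences. *)
Definition letter (p : nat) (xs : 'I_p -> binseq) (i : nat) : {ffun 'I_p -> bool} :=
  [ffun j => xs j i].

Definition subword (p : nat) (xs : 'I_p -> binseq) (k n : nat) : n.-tuple {ffun 'I_p -> bool} :=
  [tuple letter xs (k + i) | i < n].

Definition complexity (p : nat) (xs : 'I_p -> binseq) (n : nat) : nat :=
  #|[set w : n.-tuple {ffun 'I_p -> bool} | `[< exists k, w = subword xs k n >] ]|.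

Definition Q_lin_indep_1 (R : realType) (p : nat) (gamma : 'I_p -> R) : Prop :=
  forall (c0 : rat) (c : 'I_p -> rat),
    (ratr c0 + \sum_(j < p) ratr (c j) * gamma j = 0 :> R)%R ->
    c0 = 0%R /\ forall j, c j = 0%R.

(* Main.v *)
Require Import Defs.
From HB Require Import structures.
From mathcomp Require Import all_boot all_order all_algebra.
From mathcomp Require Import boolp classical_sets reals topology normedtype sequences.
From mathcomp Require Import ring lra zify.
Import Order.TTheory GRing.Theory Num.Theory.
Import numFieldNormedType.Exports.

Lemma onesD (x : binseq) k a b : ones x k (a + b) = ones x k a + ones x (k + a) b.
Proof.
rewrite /ones addnA (@big_cat_nat _ _ _ (k + a)) //; lia.
Qed.

Lemma ones0 (x : binseq) k : ones x k 0 = 0.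
Proof. by rewrite /ones addn0 big_geq. Qed.

Lemma ones1 (x : binseq) k : ones x k 1 = x k.
Proof. by rewrite /ones addn1 big_nat1. Qed.

Lemma onesS (x : binseq) k i : ones x k i.+1 = ones x k i + x (k + i).
Proof. by rewrite -addn1 onesD ones1. Qed.

Lemma bal_le (x : binseq) : balanced x -> forall n k l, ones x k n <= ones x l n + 1.
Proof.
move=> H n k l; have := H n k l; rewrite ler_norml => /andP[_].
move: (ones x k n) (ones x l n) => a b; lia.
Qed.
Arguments bal_le {x}.

Lemma chain (x : binseq) : balanced x -> forall k k',
  (forall i, ones x k i <= ones x k' i) \/ (forall i, ones x k' i <= ones x k i).
Proof.
move=> H k k'.
case: (pselect (forall i, ones x k i <= ones x k' i)) => h; [by left|right].
move/existsNP: h => [i /negP]; rewrite -ltnNge => hi l.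
rewrite leqNgt; apply/negP => hl.
have [il|li|e] := ltngtP i l; last by subst; move: hi hl; move: (ones _ _ _) (ones _ _ _) => *; lia.
- have e1 := onesD x k i (l - i); have e2 := onesD x k' i (l - i).
  rewrite (subnKC (ltnW il)) in e1 e2.
  have := bal_le H (l - i) (k' + i) (k + i); clear H.
  move: e1 e2 hi hl; move: (ones _ _ _) (ones _ _ _) (ones _ _ _) (ones _ _ _) (ones _ _ _) (ones _ _ _) => *; lia.
- have e1 := onesD x k l (i - l); have e2 := onesD x k' l (i - l).
  rewrite (subnKC (ltnW li)) in e1 e2.
  have := bal_le H (i - l) (k + l) (k' + l); clear H.
  move: e1 e2 hi hl; move: (ones _ _ _) (ones _ _ _) (ones _ _ _) (ones _ _ _) (ones _ _ _) (ones _ _ _) => *; lia.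
Qed.
Arguments chain {x}.

Definition cb (x : binseq) i :=
  if `[< exists k, ones x k i < ones x 0 i >] then (ones x 0 i).-1 else ones x 0 i.

Lemma cb_le (x : binseq) : balanced x -> forall i k,
  cb x i <= ones x k i <= (cb x i).+1.
Proof.
move=> H i k; rewrite /cb; case: asboolP => [[k0 hk0]|hn].
- have := bal_le H i 0 k; have := bal_le H i k k0; clear H.
  move: hk0; move: (ones _ _ _) (ones _ _ _) (ones _ _ _) => *; lia.
- have h1 : ~~ (ones x k i < ones x 0 i) by apply/negP => h; apply: hn; exists k.
  have := bal_le H i k 0; clear H hn.
  move: h1; move: (ones _ _ _) (ones _ _ _) => *; lia.
Qed.
Arguments cb_le {x}.

Definition score (x : binseq) n k := \sum_(i < n) (ones x k i.+1 - cb x i.+1).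

Lemma score_le (x : binseq) : balanced x -> forall n k, score x n k <= n.
Proof.
move=> H n k; rewrite /score.
apply: (@leq_trans (\sum_(i < n) 1)); last by rewrite sum_nat_const card_ord muln1.
apply: leq_sum => i _; have := cb_le H i.+1 k.
move: (ones _ _ _) (cb _ _) => *; lia.
Qed.
Arguments score_le {x}.

Lemma score_inj_aux (x : binseq) : balanced x -> forall n k k',
  (forall i, ones x k i <= ones x k' i) ->
  score x n k = score x n k' -> forall i, i <= n -> ones x k i = ones x k' i.
Proof.
move=> H n k k' hle hs i hi.
case: i hi => [|i] hi; first by rewrite !ones0.
have hab : forall l : 'I_n, true -> ones x k l.+1 - cb x l.+1 <= ones x k' l.+1 - cb x l.+1.
  by move=> l _; apply: leq_sub2r.
have := @sumnB _ (index_enum 'I_n) xpredT _ _ hab.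
rewrite /score in hs; rewrite hs subnn => /eqP.
rewrite sum_nat_eq0 => /forallP /(_ (Ordinal hi)) /= /eqP.
have := cb_le H i.+1 k; have := cb_le H i.+1 k'; have := hle i.+1.
move: (ones x k i.+1) (ones x k' i.+1) (cb x i.+1) => *; lia.
Qed.
Arguments score_inj_aux {x}.

Lemma score_inj (x : binseq) : balanced x -> forall n k k',
  score x n k = score x n k' -> forall i, i <= n -> ones x k i = ones x k' i.
Proof.
move=> H n k k' hs i hi; case: (chain H k k') => hle.
- exact: score_inj_aux hle hs i hi.
- by symmetry; apply: score_inj_aux hle (esym hs) i hi.
Qed.
Arguments score_inj {x}.

Lemma sub_eq (p : nat) (xs : 'I_p -> binseq) k k' n :
  (forall j i, i <= n -> ones (xs j) k i = ones (xs j) k' i) ->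
  subword xs k n = subword xs k' n.
Proof.
move=> h; apply: eq_from_tnth => l; rewrite !tnth_mktuple.
apply/ffunP => j; rewrite !ffunE.
have := h j l.+1 (ltn_ord l); have := h j l (ltnW (ltn_ord l)).
rewrite !onesS => ->; case: (xs j (k + l)); case: (xs j (k' + l)) => //=; lia.
Qed.

Lemma sub_ones (p : nat) (xs : 'I_p -> binseq) k k' n :
  subword xs k n = subword xs k' n ->
  forall j i, i <= n -> ones (xs j) k i = ones (xs j) k' i.
Proof.
move=> E j; elim=> [|i IH] hi; first by rewrite !ones0.
rewrite !onesS IH; last exact: ltnW. congr (_ + _).
have := congr1 (fun w => tnth w (Ordinal hi)) E; rewrite !tnth_mktuple.
by move/ffunP/(_ j); rewrite !ffunE => ->.
Qed.

Lemma complexity_le (p : nat) (xs : 'I_p -> binseq) n :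
  (forall j, balanced (xs j)) -> complexity xs n <= n.+1 ^ p.
Proof.
move=> H; rewrite /complexity.
set S := [set w | _].
pose pos (w : n.-tuple {ffun 'I_p -> bool}) : nat :=
  match pselect (exists k, w = subword xs k n) with
  | left h => projT1 (cid h) | right _ => 0 end.
have posP : forall w, w \in S -> w = subword xs (pos w) n.
  move=> w; rewrite inE => /asboolP h; rewrite /pos.
  case: pselect => [h'|//]; exact: (projT2 (cid h')).
pose F w : {ffun 'I_p -> 'I_n.+1} := [ffun j => inord (score (xs j) n (pos w))].
rewrite -(@card_in_imset _ _ F S); last first.
  move=> w w' hw hw' /ffunP hF.
  rewrite (posP _ hw) (posP _ hw'); apply: sub_eq => j.
  apply: score_inj => //.
  have := hF j; rewrite !ffunE => /(congr1 val).
  by rewrite /= !inordK // ltnS (score_le (H j)).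
apply: leq_trans (max_card _) _.
by rewrite card_ffun !card_ord.
Qed.
Local Open Scope ring_scope.

Section Kron.
Variable R : realType.

Definition fr (x : R) : R := x - (Num.floor x)%:~R.

Lemma fr_ge0 x : 0 <= fr x.
Proof. by rewrite /fr subr_ge0 floor_le. Qed.

Lemma fr_lt1 x : fr x < 1.
Proof. rewrite /fr; have := floorD1_gt x; rewrite intrD; lra. Qed.

Lemma dirichlet (p : nat) (g : nat -> R) (e : R) : 0 < e ->
  exists q : nat, (0 < q)%N /\ exists m : nat -> int,
    forall i, (i < p)%N -> `|q%:R * g i - (m i)%:~R| < e.
Proof.
move=> e0.
pose M := (Num.Def.archi_bound (e^-1)).+1.
have hM : e^-1 < M%:R.
  apply: lt_trans (archi_boundP _) _; first by rewrite invr_ge0 ltW.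
  by rewrite ltr_nat.
have hMe : 1 < e * M%:R.
  by rewrite -[X in X < _](mulfV (lt0r_neq0 e0)) (ltr_pM2l e0).
have M0 : 0 < M%:R :> R by rewrite ltr0n.
pose box (k : nat) (i : nat) : nat := Num.truncn (M%:R * fr (k%:R * g i)).
have boxlt : forall k i, (box k i < M)%N.
  move=> k i; rewrite /box truncn_lt_nat; last by rewrite mulr_ge0 ?ler0n ?fr_ge0.
  by rewrite -ltr_pdivlMl // mulVf ?fr_lt1 // lt0r_neq0.
pose B (k : 'I_(M ^ p).+1) : {ffun 'I_p -> 'I_M} := [ffun i : 'I_p => inord (box k (val i))].
have : ~~ injectiveb B.
  apply/negP => /injectiveP inj; have := leq_card B inj.
  by rewrite card_ffun !card_ord ltnn.
move/injectivePn => [k1 [k2 hne hB]].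
have key : forall a b : 'I_(M ^ p).+1, (a < b)%N -> B a = B b ->
    exists q : nat, (0 < q)%N /\ exists m : nat -> int,
    forall i, (i < p)%N -> `|q%:R * g i - (m i)%:~R| < e.
  move=> a b hab hB'; exists (b - a)%N; split; first by rewrite subn_gt0.
  exists (fun i => Num.floor (b%:R * g i) - Num.floor (a%:R * g i)) => i ip.
  have := congr1 (fun f : {ffun 'I_p -> 'I_M} => f (Ordinal ip)) hB'; rewrite !ffunE /=.
  move/(congr1 val); rewrite /= !inordK; [|exact: boxlt|exact: boxlt]; rewrite /box => hbx.
  have ha := truncn_itv (mulr_ge0 (ltW M0) (fr_ge0 (a%:R * g i))).
  have hb := truncn_itv (mulr_ge0 (ltW M0) (fr_ge0 (b%:R * g i))).
  rewrite hbx in ha.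
  have hd : `|M%:R * fr (b%:R * g i) - M%:R * fr (a%:R * g i)| < 1.
    move: ha hb; set u := M%:R * fr (a%:R * g i); set v := M%:R * fr (b%:R * g i).
    set t := Num.truncn v; rewrite -!natr1 ltr_norml.
    move=> /andP[h1 h2] /andP[h3 h4]; apply/andP; split; lra.
  have -> : (b - a)%N%:R * g i - (Num.floor (b%:R * g i) - Num.floor (a%:R * g i))%:~R
          = fr (b%:R * g i) - fr (a%:R * g i).
    by rewrite /fr (natrB _ (ltnW hab)) intrD intrN; ring.
  rewrite -mulrBr normrM (gtr0_norm M0) in hd.
  have : `|fr (b%:R * g i) - fr (a%:R * g i)| * M%:R < e * M%:R.
    by rewrite mulrC; apply: lt_trans hd hMe.
  by rewrite ltr_pM2r.
have [h|h|h] := ltngtP k1 k2.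
- exact: key h hB.
- exact: key h (esym hB).
- by move: hne; rewrite -val_eqE /= h eqxx.
Qed.


Definition indep (p : nat) (g : nat -> R) :=
  forall (c0 : int) (c : nat -> int),
    c0%:~R + \sum_(i < p) (c i)%:~R * g i = 0 -> forall i, (i < p)%N -> c i = 0.

Lemma andP_fr x : 0 <= fr x < 1.
Proof. by rewrite fr_ge0 fr_lt1. Qed.

Lemma norm_mul_fr (H F e : R) : `|H| < e -> 0 <= F < 1 -> `|H * F| < e.
Proof.
move=> hH /andP[F0 F1]; rewrite normrM (ger0_norm F0).
apply: le_lt_trans hH; rewrite -[X in _ <= X]mulr1.
by apply: ler_wpM2l; [exact: normr_ge0|exact: ltW].
Qed.

Lemma kron (p : nat) (g : nat -> R) : indep p g ->
  forall (y : nat -> R) (d : R), 0 < d ->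
  exists k : int, exists m : nat -> int, forall i, (i < p)%N ->
    `|k%:~R * g i - (m i)%:~R - y i| < d.
Proof.
elim: p g => [|p IH] g ind y d d0.
  by exists 0, (fun _ => 0) => i.
have d20 : 0 < d / 2 by rewrite divr_gt0.
have [q [q0 [m0 hq]]] := @dirichlet p.+1 g _ d20.
pose h i := q%:R * g i - (m0 i)%:~R.
have hP : h p != 0.
  apply/eqP => hp0.
  have hs : (- m0 p)%:~R + \sum_(i < p.+1) ((if val i == p then q%:Z else 0))%:~R * g i = 0.
    rewrite big_ord_recr /= eqxx big1 => [|i _]; last by rewrite (ltn_eqF (ltn_ord i)) mul0r.
    by rewrite add0r intrN -hp0 /h; ring.
  have := ind _ (fun i => if i == p then q%:Z else 0) hs p (ltnSn p).
  by rewrite eqxx => -[] hq0; rewrite hq0 in q0.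
pose beta i := - h i / h p.
have indb : indep p beta.
  move=> c0 c hc i ip.
  pose c' j := if j == p then c0 * q%:Z else - (c j * q%:Z).
  pose c0' := - (c0 * m0 p) + \sum_(j < p) c j * m0 j.
  have E1 : \sum_(j < p) (c j * m0 j)%:~R + \sum_(j < p) (c' j)%:~R * g j
      = - \sum_(j < p) (c j)%:~R * h j.
    rewrite -big_split -sumrN; apply: eq_bigr => j _.
    by rewrite /c' (ltn_eqF (ltn_ord j)) /h intrN !intrM -!pmulrn /=; ring.
  have E2 : h p * \sum_(j < p) (c j)%:~R * beta j = - \sum_(j < p) (c j)%:~R * h j.
    rewrite mulr_sumr -sumrN; apply: eq_bigr => j _.
    by rewrite /beta; field.
  have E3 : \sum_(j < p) (c j)%:~R * beta j = - c0%:~R.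
    by apply/eqP; rewrite -subr_eq0 opprK addrC hc.
  rewrite E3 in E2.
  have hs : c0'%:~R + \sum_(j < p.+1) (c' j)%:~R * g j = 0.
    rewrite big_ord_recr /=.
    have -> : c' p = c0 * q%:Z by rewrite /c' eqxx.
    rewrite /c0' intrD intrN raddf_sum /=.
    move: E1 E2; move: (\sum_(j < p) (c j * m0 j)%:~R) (\sum_(j < p) (c' j)%:~R * g j) (\sum_(j < p) (c j)%:~R * h j) => s1 s2 s3 e1 e2.
    have -> : s2 = - s3 - s1 by rewrite -e1; ring.
    by rewrite -e2 /h !intrM -!pmulrn; ring.
  have := ind c0' c' hs i (ltnW ip).
  rewrite /c' (ltn_eqF ip) => /eqP; rewrite oppr_eq0 mulf_eq0 orbC.
  by move/orP => [/eqP [] hq0|/eqP //]; rewrite hq0 in q0.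
pose y' i := y i + y p * beta i.
have [k' [m' hk']] := IH beta indb y' (d / 2) d20.
pose wp := y p - k'%:~R.
pose t := Num.floor (wp / h p).
exists (t * q%:Z), (fun i => if i == p then t * m0 p - k' else t * m0 i + m' i) => i.
rewrite ltnS leq_eqVlt => /orP[/eqP ->|ip].
- rewrite eqxx.
  have -> : (t * q%:Z)%:~R * g p - (t * m0 p - k')%:~R - y p = - (h p * fr (wp / h p)).
    have -> : (t * q%:Z)%:~R * g p - (t * m0 p - k')%:~R = t%:~R * h p + k'%:~R.
      by rewrite /h !intrM intrB -pmulrn; ring.
    by rewrite /fr /wp -/t; field.
  rewrite normrN; apply: lt_trans (_ : d / 2 < d); last by lra.
  by apply: norm_mul_fr; [exact: hq|rewrite fr_ge0 fr_lt1].
- rewrite (ltn_eqF ip).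
  have -> : (t * q%:Z)%:~R * g i - (t * m0 i + m' i)%:~R - y i
       = (k'%:~R * beta i - (m' i)%:~R - y' i) - h i * fr (wp / h p).
    have -> : (t * q%:Z)%:~R * g i - (t * m0 i + m' i)%:~R = t%:~R * h i - (m' i)%:~R.
      by rewrite /h !intrM intrD -pmulrn; ring.
    by rewrite /fr /wp -/t /y' /beta; field.
  apply: le_lt_trans (ler_normB _ _) _.
  have := hk' i ip; have := @norm_mul_fr (h i) (fr (wp / h p)) (d / 2) (hq i (ltnW ip)) (andP_fr _).
  lra.
Qed.


Lemma kron_pos (p : nat) (g : nat -> R) : indep p g ->
  forall (y : nat -> R) (d : R), 0 < d ->
  exists k : nat, exists m : nat -> int, forall i, (i < p)%N ->
    `|k%:R * g i - (m i)%:~R - y i| < d.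
Proof.
move=> ind y d d0.
have d20 : 0 < d / 2 by rewrite divr_gt0.
have [[n|n] [m hm]] := @kron p g ind y _ d20.
  exists n, m => i ip; apply: lt_trans (hm i ip) _; lra.
have N0 : 0 < n.+1%:R :> R by rewrite ltr0n.
have e0 : 0 < d / 2 / n.+1%:R by rewrite !divr_gt0.
have [q [q0 [m1 hq]]] := @dirichlet p g _ e0.
exists (n.+1 * q - n.+1)%N, (fun i => m i + n.+1%:Z * m1 i) => i ip.
have -> : (n.+1 * q - n.+1)%N%:R * g i - (m i + n.+1%:Z * m1 i)%:~R - y i
    = ((Negz n)%:~R * g i - (m i)%:~R - y i) + n.+1%:R * (q%:R * g i - (m1 i)%:~R).
  rewrite natrB; last by rewrite -{1}(muln1 n.+1) leq_mul2l q0.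
  by rewrite NegzE intrD intrM intrN natrM -!pmulrn; ring.
apply: le_lt_trans (ler_normD _ _) _.
rewrite normrM (gtr0_norm N0).
have h1 := hm i ip.
have h2 : n.+1%:R * `|q%:R * g i - (m1 i)%:~R| < d / 2.
  by rewrite mulrC -ltr_pdivlMr //; apply: hq.
lra.
Qed.

End Kron.
Local Open Scope classical_set_scope.
Local Open Scope ring_scope.

Lemma ones_blocks (x : binseq) l N :
  ones x 0 (N * l) = \sum_(r < N) ones x (r * l) l.
Proof.
elim: N => [|N IH]; first by rewrite mul0n ones0 big_ord0.
by rewrite big_ord_recr /= -IH mulSnr onesD add0n.
Qed.

Lemma blocks_le (x : binseq) : balanced x -> forall k l N,
  (N * ones x k l <= ones x 0 (N * l) + N)%N /\ (ones x 0 (N * l) <= N * (ones x k l).+1)%N.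
Proof.
move=> H k l N; rewrite ones_blocks; split.
- rewrite -[X in (_ <= _ + X)%N](card_ord N) -sum1_card -big_split /=.
  rewrite -[X in (X * _)%N](card_ord N) -sum_nat_const.
  by apply: leq_sum => r _; apply: bal_le.
- rewrite -[X in (_ <= X * _)%N](card_ord N) -sum_nat_const.
  by apply: leq_sum => r _; rewrite -addn1; apply: bal_le.
Qed.
Arguments blocks_le {x}.

Section Freq.
Variable R : realType.

Lemma lim_lb (u : nat -> R) (g c : R) : u @ \oo --> g ->
  (forall M, exists m, (M <= m)%N /\ c <= u m) -> c <= g.
Proof.
move=> hu hc; rewrite leNgt; apply/negP => hlt.
have := @cvgr_dist_lt _ _ _ _ _ u g hu (c - g); rewrite subr_gt0 => /(_ _ hlt) [M _ hM].
have [m [hm hcm]] := hc M.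
have := hM m hm; rewrite /= ltr_norml => /andP[h _]; lra.
Qed.

Lemma lim_ub (u : nat -> R) (g c : R) : u @ \oo --> g ->
  (forall M, exists m, (M <= m)%N /\ u m <= c) -> g <= c.
Proof.
move=> hu hc; rewrite leNgt; apply/negP => hlt.
have := @cvgr_dist_lt _ _ _ _ _ u g hu (g - c); rewrite subr_gt0 => /(_ _ hlt) [M _ hM].
have [m [hm hcm]] := hc M.
have := hM m hm; rewrite /= ltr_norml => /andP[_ h]; lra.
Qed.

Lemma freq_bounds (x : binseq) (g : R) : balanced x -> freq R x @ \oo --> g ->
  forall k l, (ones x k l)%:R <= l%:R * g + 1 /\ l%:R * g - 1 <= (ones x k l)%:R.
Proof.
move=> H hf k l.
case: l => [|l]; first by rewrite ones0 mul0r add0r; split; lra.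
set a := ones x k l.+1.
have l0 : 0 < l.+1%:R :> R by rewrite ltr0n.
split.
- have : (a%:R - 1) / l.+1%:R <= g.
    apply: (@lim_lb (freq R x) g _ hf) => M; exists (M.+1 * l.+1)%N; split.
      by rewrite mulSn; lia.
    have [h1 _] := blocks_le H k l.+1 M.+1.
    rewrite /freq ler_pdivlMr ?ltr0n ?muln_gt0 // natrM.
    have : (M.+1 * a)%:R <= (ones x 0 (M.+1 * l.+1) + M.+1)%:R :> R by rewrite ler_nat.
    rewrite natrM natrD => h; rewrite mulrCA divfK ?lt0r_neq0 //.
    move: h; move: (ones _ _ _)%:R => o h; nra.
  by rewrite ler_pdivrMr // => h; lra.
- have : g <= (a%:R + 1) / l.+1%:R.
    apply: (@lim_ub (freq R x) g _ hf) => M; exists (M.+1 * l.+1)%N; split.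
      by rewrite mulSn; lia.
    have [_ h2] := blocks_le H k l.+1 M.+1.
    rewrite /freq ler_pdivrMr ?ltr0n ?muln_gt0 // natrM.
    have : (ones x 0 (M.+1 * l.+1))%:R <= (M.+1 * a.+1)%:R :> R by rewrite ler_nat.
    rewrite natrM -natr1 => h; rewrite mulrCA divfK ?lt0r_neq0 //.
    move: h; move: (ones _ _ _)%:R => o h; nra.
  by rewrite ler_pdivlMr // => h; lra.
Qed.


Lemma beta_exists (x : binseq) (g : R) : balanced x -> freq R x @ \oo --> g ->
  exists b : R, forall k, k%:R * g + b - 1 <= (ones x 0 k)%:R <= k%:R * g + b.
Proof.
move=> H hf.
pose al k := (ones x 0 k)%:R - k%:R * g.
have hal : forall k m, al m <= al k + 1.
  move=> k m; rewrite /al.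
  have [km|mk] := leqP k m.
  - have e := onesD x 0 k (m - k); rewrite subnKC // add0n in e.
    have [h1 _] := @freq_bounds x g H hf k (m - k).
    rewrite natrB // in h1; rewrite e natrD; lra.
  - have e := onesD x 0 m (k - m); rewrite (subnKC (ltnW mk)) add0n in e.
    have [_ h2] := @freq_bounds x g H hf m (k - m).
    rewrite (natrB _ (ltnW mk)) in h2; rewrite e natrD; lra.
pose E := range al.
have E0 : E !=set0 by exists (al 0), 0.
have hs : has_sup E by split => //; exists (al 0 + 1) => z [k _ <-]; exact: hal.
exists (sup E) => k.
have h1 : al k <= sup E by apply: sup_upper_bound => //; exists k.
have h2 : sup E <= al k + 1 by apply: ge_sup => // z [m _ <-]; exact: hal.
move: h1 h2; rewrite /al => h1 h2; apply/andP; split; lra.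
Qed.

End Freq.
Local Open Scope ring_scope.

Section Final.
Variable R : realType.

Lemma fin_min (T : finType) (g : T -> R) : (forall t, 0 < g t) ->
  exists e : R, [/\ 0 < e, e <= 1 & forall t, e <= g t].
Proof.
move=> gp.
suff : forall s : seq T, exists e : R, [/\ 0 < e, e <= 1 & forall t, t \in s -> e <= g t].
  by move=> /(_ (enum T)) [e [e0 e1 he]]; exists e; split => // t; apply: he; rewrite mem_enum.
elim=> [|a s [e [e0 e1 he]]]; first by exists 1; split => //; rewrite ltr01.
exists (Order.min e (g a)); split.
- by rewrite lt_min e0 gp.
- by rewrite ge_min e1.
- move=> t; rewrite inE => /orP[/eqP ->|ts]; first by rewrite ge_min lexx orbT.
  by rewrite ge_min he.
Qed.

Lemma floor_opp (z : R) : (forall M : int, z <> M%:~R) ->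
  Num.floor z + Num.floor (- z) = -1.
Proof.
move=> nz.
have h1 := floor_le z; have h2 := floorD1_gt z.
have h3 := floor_le (- z); have h4 := floorD1_gt (- z).
move: h1 h2 h3 h4; set a := Num.floor z; set b := Num.floor (- z).
rewrite !intrD => h1 h2 h3 h4.
have e1 : (a + b)%:~R <= (0 : int)%:~R :> R by rewrite intrD; lra.
have e2 : (-2 : int)%:~R < (a + b)%:~R :> R by rewrite !intrD; lra.
have e3 : (a + b)%:~R != (0 : int)%:~R :> R.
  apply/negP => /eqP h; apply: (nz a); rewrite intrD /= in h.
  apply/eqP; rewrite eq_le; apply/andP; split; lra.
rewrite ler_int in e1; rewrite ltr_int in e2; rewrite eqr_int in e3.
lia.
Qed.


Lemma pos_val (x : binseq) (g b y e : R) (k : nat) (m : int) (i : nat) (F : int) :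
  (forall k, k%:R * g + b - 1 <= (ones x 0 k)%:R <= k%:R * g + b) ->
  `|k%:R * g - m%:~R - (y - b)| < e ->
  F%:~R + e <= y + i%:R * g -> y + i%:R * g <= F%:~R + 1 - e ->
  (ones x 0 (k + i))%:Z = m + F.
Proof.
move=> hb he h1 h2.
have /andP[u1 u2] := hb (k + i)%N.
move: he; rewrite ltr_norml => /andP[v1 v2].
rewrite natrD in u1 u2.
have w1 : (ones x 0 (k + i))%:Z%:~R < (m + F + 1)%:~R :> R.
  rewrite !intrD /=; lra.
have w2 : (m + F - 1)%:~R < (ones x 0 (k + i))%:Z%:~R :> R.
  rewrite !intrD intrN /=; lra.
rewrite ltr_int in w1; rewrite ltr_int in w2; lia.
Qed.

Definition ext (p : nat) (f : 'I_p -> R) (i : nat) : R :=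
  if insub i is Some j then f j else 0.
Arguments ext {p}.

Lemma extE (p : nat) (f : 'I_p -> R) (j : 'I_p) : ext f j = f j.
Proof. by rewrite /ext valK. Qed.

Lemma indep_ext (p : nat) (gamma : 'I_p -> R) : Q_lin_indep_1 gamma -> @indep R p (ext gamma).
Proof.
move=> hq c0 c hc i ip.
have hs : ratr c0%:Q + \sum_(j < p) ratr (c j)%:Q * gamma j = 0.
  rewrite ratr_int -[X in _ = X]hc; congr (_ + _).
  by apply: eq_bigr => j _; rewrite ratr_int extE.
have [_ /(_ (Ordinal ip))] := hq _ _ hs.
by move=> /= /eqP; rewrite intr_eq0 => /eqP.
Qed.

Lemma nonint (p : nat) (gamma : 'I_p -> R) : Q_lin_indep_1 gamma ->
  forall j (d : int), d != 0 -> forall M : int, d%:~R * gamma j <> M%:~R.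
Proof.
move=> hq j d d0 M hM.
have hs : ratr (- M)%:Q + \sum_(j' < p) ratr (if j' == j then d%:Q else 0) * gamma j' = 0.
  rewrite (bigD1 j) //= eqxx big1 => [|j' hj']; last by rewrite (negbTE hj') rmorph0 mul0r.
  by rewrite addr0 !ratr_int hM intrN addNr.
have [_ /(_ j)] := hq _ _ hs.
by rewrite eqxx => /eqP; rewrite intr_eq0 (negbTE d0).
Qed.


Lemma complexity_ge (p : nat) (gamma : 'I_p -> R) (xs : 'I_p -> binseq) n :
  Q_lin_indep_1 gamma -> (forall j, X_gamma (gamma j) (xs j)) ->
  (n.+1 ^ p <= complexity xs n)%N.
Proof.
move=> hq hX.
have hbal j : balanced (xs j) by case: (hX j).
have hfr j : (freq R (xs j) @ \oo --> gamma j)%classic by case: (hX j).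
have [bt hbt] := choice (fun j => @beta_exists R (xs j) (gamma j) (hbal j) (hfr j)).
pose Fl j (d : int) := Num.floor (d%:~R * gamma j).
pose gf (t : 'I_p * 'I_(n.+1 + n)) :=
  (Fl t.1 ((val t.2)%:Z - n%:Z) + 1)%:~R - ((val t.2)%:Z - n%:Z)%:~R * gamma t.1.
have gfp : forall t, 0 < gf t.
  by move=> t; rewrite /gf subr_gt0 /Fl floorD1_gt.
have [d0 [d0p d01 hd0]] := @fin_min _ gf gfp.
have hdel : forall j (i c : nat), (i <= n)%N -> (c <= n)%N ->
    (i%:Z - c%:Z)%:~R * gamma j + d0 <= (Fl j (i%:Z - c%:Z) + 1)%:~R.
  move=> j i c hi hc.
  have hlt : (i + n - c < n.+1 + n)%N by lia.
  have := hd0 (j, Ordinal hlt); rewrite /gf /=.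
  have -> : ((i + n - c)%N%:Z - n%:Z) = i%:Z - c%:Z by lia.
  move=> h; lra.
have hpos : forall c : {ffun 'I_p -> 'I_n.+1}, exists k : nat, forall j (i : nat),
    (i <= n)%N -> (ones (xs j) k i)%:Z = Fl j (i%:Z - (c j)%:Z) - Fl j (0%:Z - (c j)%:Z).
  move=> c.
  pose Y (j : 'I_p) := - (c j)%:R * gamma j + d0 / 2 - bt j.
  have d4 : 0 < d0 / 4 by rewrite divr_gt0.
  have [k [m hkm]] := @kron_pos R p (ext gamma) (@indep_ext p gamma hq) (ext Y) _ d4.
  exists k => j i hi.
  have hkj := hkm j (ltn_ord j); rewrite !extE in hkj.
  have hval : forall i0 : nat, (i0 <= n)%N ->
      (ones (xs j) 0 (k + i0))%:Z = m j + Fl j (i0%:Z - (c j)%:Z).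
    move=> i0 hi0.
    have hz : - (c j)%:R * gamma j + d0 / 2 + i0%:R * gamma j
        = (i0%:Z - (c j)%:Z)%:~R * gamma j + d0 / 2.
      by rewrite intrB -!pmulrn; ring.
    have hF := floor_le ((i0%:Z - (c j)%:Z)%:~R * gamma j).
    have hD := hdel j i0 (c j) hi0 (ltn_ord (c j)).
    apply: (@pos_val (xs j) (gamma j) (bt j) (- (c j)%:R * gamma j + d0 / 2) (d0 / 4) k (m j) i0 _ (hbt j) hkj).
      rewrite hz -/(Fl _ _) in hF *; lra.
    rewrite hz; rewrite intrD in hD; lra.
  have := hval i hi; have := hval 0%N (leq0n n).
  have := onesD (xs j) 0 k i; rewrite add0n addn0 => ->.
  rewrite PoszD => h1 h2; rewrite h1 in h2.
  by move: h2; move: (Fl j _) (Fl j _) (ones _ _ _) => *; lia.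
have [kp hkp] := choice hpos.
pose G (c : {ffun 'I_p -> 'I_n.+1}) := subword xs (kp c) n.
have Ginj : injective G.
  move=> c c' hG; apply/ffunP => j; apply/eqP; apply: contraT => hne.
  have hs := @sub_ones p xs _ _ n hG j.
  have ha : (c j <= n)%N by rewrite -ltnS.
  have hb : (c' j <= n)%N by rewrite -ltnS.
  have q1 := hkp c j _ ha; have q2 := hkp c' j _ ha.
  have q3 := hkp c j _ hb; have q4 := hkp c' j _ hb.
  rewrite (hs _ ha) in q1; rewrite (hs _ hb) in q3.
  have hab : ((c j)%:Z - (c' j)%:Z) != 0.
    apply/eqP => h; move/negP: hne; apply; apply/eqP/val_inj => /=; move: h; move: (nat_of_ord (c j)) (nat_of_ord (c' j)) => *; lia.
  have hfo := floor_opp _ (@nonint p gamma hq j _ hab).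
  have e0 : forall a : nat, Fl j (a%:Z - a%:Z) = 0 by move=> a; rewrite subrr /Fl mul0r floor0.
  rewrite !e0 in q1 q4.
  have e1 : Fl j ((c' j)%:Z - (c j)%:Z) = Num.floor (- (((c j)%:Z - (c' j)%:Z)%:~R * gamma j)).
    by rewrite /Fl -mulNr -intrN opprB.
  rewrite -e1 in hfo.
  change (Fl j ((c j)%:Z - (c' j)%:Z) + Fl j ((c' j)%:Z - (c j)%:Z) = -1) in hfo.
  move: q1 q2 q3 q4 hfo.
  move: (Fl j ((c j)%:Z - (c' j)%:Z)) (Fl j ((c' j)%:Z - (c j)%:Z)) (Fl j (0%:Z - (c j)%:Z)) (Fl j (0%:Z - (c' j)%:Z)).
  move: (ones (xs j) (kp c') (c j)) (ones (xs j) (kp c') (c' j)) => *; lia.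
rewrite /complexity.
apply: leq_trans (subset_leq_card (_ : G @: (finset.setT : {set {ffun 'I_p -> 'I_n.+1}}) \subset _)).
  by rewrite card_imset // cardsT card_ffun !card_ord.
apply/fintype.subsetP => w /imsetP [c _ ->]; rewrite inE; apply/asboolP; by exists (kp c).
Qed.

End Final.

Theorem lemma3 (R : realType) (p : nat) (gamma : 'I_p -> R) :
  (1 <= p)%N ->
  (forall j, (0 < gamma j)%R /\ (gamma j < 1)%R) ->
  Q_lin_indep_1 gamma ->
  forall xs : 'I_p -> binseq,
    (forall j, X_gamma (gamma j) (xs j)) ->
    forall n : nat, (1 <= n)%N -> complexity xs n = (n.+1 ^ p)%N.
Proof.
move=> _ _ hq xs hX n _.
apply/eqP; rewrite eqn_leq; apply/andP; split.
- by apply: complexity_le => j; case: (hX j).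
- exact: (@complexity_ge R p gamma xs n hq hX).
Qed.
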